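(* Let $w,\pi,u\in S_n$ with $u\leq_L w$ and $u\leq_R\pi$. If \[ \ell(wu^{-1})+\ell(u)+\ell(u^{-1}\pi)>\ell(wu^{-1}\pi), \] then there exists $u'\in S_n$ with $u'>_B u$ in strong Bruhat order such that $u'\leq_L w$ and $u'\leq_R\pi$.
   Context: $S_n$ is the symmetric group with product $(uv)(i)=u(v(i))$. The length $\ell(w)$ is the number of inversions $\{(i,j):i<j,\ w(i)>w(j)\}$. Left weak order: $v\leq_L w$ iff $w=zv$ with $\ell(w)=\ell(z)+\ell(v)$; right weak order: $v\leq_R w$ iff $w=vz$ with $\ell(w)=\ell(v)+\ell(z)$. Strong Bruhat order $\leq_B$ is the partial order generated by the relations $v<_B vt$ whenever $t$ is a transposition and $\ell(vt)>\ell(v)$. *)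

(* Defs.v *)
From mathcomp Require Import all_boot all_order all_fingroup.
From Stdlib Require Import Relations.
Set Implicit Arguments. Unset Strict Implicit. Unset Printing Implicit Defensive.

(* S_n = permutations of 'I_n.  The paper's product is (uv)(i) = u(v(i));
   mathcomp's group product is (s * t) x = t (s x), so we define pmul
   explicitly with the paper's convention. *)
Definition pmul n (u v : {perm 'I_n}) : {perm 'I_n} := (v * u)%g.
Definition pinv n (u : {perm 'I_n}) : {perm 'I_n} := (u^-1)%g.

Lemma pmulE n (u v : {perm 'I_n}) i : pmul u v i = u (v i).
Proof. by rewrite /pmul permM. Qed.

Definition len n (w : {perm 'I_n}) : nat :=
  #|[set p : 'I_n * 'I_n | (p.1 < p.2) && (w p.2 < w p.1)]|.

Definition leL n (v w : {perm 'I_n}) : Prop :=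
  exists z : {perm 'I_n}, w = pmul z v /\ len w = len z + len v.

Definition leR n (v w : {perm 'I_n}) : Prop :=
  exists z : {perm 'I_n}, w = pmul v z /\ len w = len v + len z.

Definition is_transposition n (t : {perm 'I_n}) : Prop :=
  exists i j : 'I_n, i != j /\ t = tperm i j.

Definition bruhat_step n (v w : {perm 'I_n}) : Prop :=
  exists t, is_transposition t /\ w = pmul v t /\ len v < len w.

Definition bruhat_le n : relation {perm 'I_n} := clos_refl_trans _ (@bruhat_step n).

Definition bruhat_lt n (v w : {perm 'I_n}) : Prop := bruhat_le v w /\ v <> w.

(* Main.v *)
Require Import Defs.
From mathcomp Require Import all_boot all_order all_fingroup.
From mathcomp Require Import zify.
From Stdlib Require Import Relations.
Set Implicit Arguments. Unset Strict Implicit. Unset Printing Implicit Defensive.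

Lemma card_split (T : finType) (P Q : pred T) :
  #|[set x | P x]| = #|[set x | P x && Q x]| + #|[set x | P x && ~~ Q x]|.
Proof.
rewrite -(cardsID [set x | Q x] [set x | P x]); congr (_ + _);
  apply: eq_card => x; rewrite !inE //; by rewrite andbC.
Qed.

Lemma card_ext (T : finType) (P Q : pred T) :
  (forall x, P x = Q x) -> #|[set x | P x]| = #|[set x | Q x]|.
Proof. move=> H; apply: eq_card => x; by rewrite !inE H. Qed.

Lemma card_reindex (T : finType) (f : T -> T) (P : pred T) :
  injective f -> #|[set x | P (f x)]| = #|[set x | P x]|.
Proof.
move=> inj; rewrite -(card_preimset [set x | P x] inj); apply: eq_card => x; by rewrite !inE.
Qed.

Lemma perm_neq n (x : {perm 'I_n}) (i j : 'I_n) : i != j -> (x i : nat) != x j.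
Proof. by move=> H; rewrite val_eqE (inj_eq perm_inj). Qed.

Lemma ord_neq n (i j : 'I_n) : i != j -> (i : nat) != j.
Proof. by []. Qed.

Definition cnt n (z v : {perm 'I_n}) :=
  #|[set p : 'I_n * 'I_n | (p.1 < p.2) && (v p.2 < v p.1) && (z (v p.1) < z (v p.2))]|.

Lemma len_mul n (z v : {perm 'I_n}) : len (pmul z v) + 2 * cnt z v = len z + len v.
Proof.
set A1 := #|[set p : 'I_n * 'I_n | (p.1 < p.2) && (v p.2 < v p.1) && (z (v p.2) < z (v p.1))]|.
set A2 := #|[set p : 'I_n * 'I_n | (p.1 < p.2) && (v p.1 < v p.2) && (z (v p.2) < z (v p.1))]|.
have Ev : len v = A1 + cnt z v.
  rewrite /len (card_split (fun p : 'I_n * 'I_n => (p.1 < p.2) && (v p.2 < v p.1))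
                  (fun p : 'I_n * 'I_n => z (v p.2) < z (v p.1))).
  congr (_ + _); apply: card_ext => -[a b] /=.
  case: (ltnP a b) => //= ab; case: (ltnP (v b) (v a)) => //= vab.
  have : (z (v a) : nat) != z (v b).
    apply: perm_neq; apply: perm_neq; rewrite neq_ltn ab //.
  lia.
have Ezv : len (pmul z v) = A1 + A2.
  rewrite /len (card_split (fun p : 'I_n * 'I_n => (p.1 < p.2) && (pmul z v p.2 < pmul z v p.1))
                  (fun p : 'I_n * 'I_n => v p.2 < v p.1)).
  congr (_ + _); apply: card_ext => -[a b] /=; rewrite !pmulE.
    by case: (a < b); case: (v b < v a); case: (z (v b) < z (v a)).
  case: (ltnP a b) => //= ab.
  have : (v a : nat) != v b by apply: perm_neq; rewrite neq_ltn ab.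
  case: (ltnP (v b) (v a)) => //= vab; case: (z (v b) < z (v a)) => //=; lia.
have Ez : len z = A2 + cnt z v.
  rewrite /len -(card_reindex (fun p : 'I_n * 'I_n => (p.1 < p.2) && (z p.2 < z p.1))
                  (f := fun p : 'I_n * 'I_n => (v p.1, v p.2))); last first.
    by move=> [a b] [c d] /= [] /perm_inj -> /perm_inj ->.
  rewrite /= (card_split (fun p : 'I_n * 'I_n => (v p.1 < v p.2) && (z (v p.2) < z (v p.1)))
                  (fun p : 'I_n * 'I_n => p.1 < p.2)).
  congr (_ + _).
    by apply: card_ext => -[a b] /=; case: (a < b); case: (v a < v b); case: (z (v b) < z (v a)).
  rewrite /cnt -(card_reindex _ (f := fun p : 'I_n * 'I_n => (p.2, p.1))); last first.
    by move=> [a b] [c d] /= [] -> ->.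
  apply: card_ext => -[a b] /=.
  case vab: (v b < v a); last by rewrite /= !andbF.
  have : (a : nat) != b by apply/negP => /eqP /val_inj E; move: vab; rewrite E ltnn.
  case: (ltnP a b) => ab; case: (z (v a) < z (v b)) => //=; lia.
lia.
Qed.
Definition IncL n (v w : {perm 'I_n}) := forall i j : 'I_n, i < j -> v j < v i -> w j < w i.

Lemma pinvE n (x : {perm 'I_n}) i : pinv x (x i) = i.
Proof. by rewrite /pinv permK. Qed.
Lemma pinvE' n (x : {perm 'I_n}) i : x (pinv x i) = i.
Proof. by rewrite /pinv permKV. Qed.

Lemma len_inv n (x : {perm 'I_n}) : len (pinv x) = len x.
Proof.
rewrite /len -(card_reindex _ (f := fun p : 'I_n * 'I_n => (x p.2, x p.1))); last first.
  by move=> [a b] [c d] /= [] /perm_inj -> /perm_inj ->.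
apply: card_ext => -[a b] /=; by rewrite !pinvE andbC.
Qed.

Lemma ord_lt_neq n (a b : 'I_n) : a < b -> a != b.
Proof. by move=> H; apply/negP => /eqP E; move: H; rewrite E ltnn. Qed.

Lemma leL_IncL n (v w : {perm 'I_n}) : leL v w <-> IncL v w.
Proof.
split.
  move=> [z [Ew E]] i j ij vji.
  have := len_mul z v; rewrite -Ew E => H.
  have c0 : cnt z v = 0 by lia.
  case: (ltnP (w j) (w i)) => // H2.
  have : 0 < cnt z v.
    apply/card_gt0P; exists (i, j); rewrite inE /= ij vji /=.
    have : (w i : nat) != w j by apply: perm_neq; apply: ord_lt_neq.
    rewrite Ew !pmulE in H2 *; lia.
  by rewrite c0.
move=> H; exists (pmul w (pinv v)); split.
  by apply/permP => i; rewrite !pmulE pinvE.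
have := len_mul (pmul w (pinv v)) v.
have -> : pmul (pmul w (pinv v)) v = w by apply/permP => i; rewrite !pmulE pinvE.
suff -> : cnt (pmul w (pinv v)) v = 0 by lia.
apply/eqP; rewrite cards_eq0; apply/eqP/setP => -[a b]; rewrite !inE /= !pmulE !pinvE.
apply/negbTE; apply/negP => /andP [/andP [ab vba] wab].
have := H a b ab vba; lia.
Qed.

Lemma pinv_mul n (a b : {perm 'I_n}) : pinv (pmul a b) = pmul (pinv b) (pinv a).
Proof. by rewrite /pinv /pmul invMg. Qed.
Lemma pinvK n (a : {perm 'I_n}) : pinv (pinv a) = a.
Proof. by rewrite /pinv invgK. Qed.

Lemma leR_iff n (v p : {perm 'I_n}) : leR v p <-> leL (pinv v) (pinv p).
Proof.
split.
  move=> [z [-> E]]; exists (pinv z); split; first by rewrite pinv_mul.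
  by rewrite !len_inv E addnC.
move=> [z [E1 E2]]; exists (pinv z); split.
  by rewrite -[p]pinvK E1 pinv_mul pinvK.
by move: E2; rewrite !len_inv => ->; rewrite addnC.
Qed.

Lemma ordnat n (a b : 'I_n) : a <> b -> (a : nat) <> b.
Proof. by move=> H E; apply: H; apply: val_inj. Qed.

Lemma len_swap n (x : {perm 'I_n}) (i j : 'I_n) :
  i < j -> x i < x j -> len x < len (pmul x (tperm i j)).
Proof.
move=> ij xij.
pose g (p : 'I_n * 'I_n) := if tperm i j p.1 < tperm i j p.2 then (tperm i j p.1, tperm i j p.2) else p.
set Px := [set p : 'I_n * 'I_n | (p.1 < p.2) && (x p.2 < x p.1)].
set Py := [set p : 'I_n * 'I_n | (p.1 < p.2) && (pmul x (tperm i j) p.2 < pmul x (tperm i j) p.1)].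
have gK : {in Px, cancel g g}.
  move=> [a b]; rewrite inE /= => /andP [ab _]; rewrite /g /=.
  case E: (tperm i j a < tperm i j b) => /=; last by rewrite E.
  by rewrite !tpermK ab.
have sub : g @: Px \proper Py.
  apply/properP; split.
    apply/subsetP => q /imsetP [[a b]]; rewrite inE /= => /andP [ab xab] ->.
    rewrite /g /= inE; case: ifP => /= tab.
      by rewrite tab !pmulE !tpermK.
    rewrite ab !pmulE /=.
    have tab' : tperm i j b < tperm i j a.
      have : (tperm i j a : nat) != tperm i j b by apply: perm_neq; apply: ord_lt_neq.
      move: tab; lia.
    move: tab' ab xab ij xij.
    case: (tpermP i j a) => [?|?|/ordnat na1 /ordnat na2]; case: (tpermP i j b) => [?|?|/ordnat nb1 /ordnat nb2];
      subst; lia.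
  exists (i, j).
    by rewrite inE /= ij !pmulE tpermL tpermR.
  apply/imsetP => -[q qP Eq].
  have : q = (i, j).
    rewrite -(gK q qP) -Eq /g /= tpermL tpermR.
    by rewrite ltnNge ltnW.
  move=> Eq2; move: qP; rewrite Eq2 inE /=; lia.
rewrite /len -/Px -/Py -(card_in_imset (can_in_inj gK)).
exact: proper_card.
Qed.

Lemma tperm3 n (p q r : 'I_n) : p != q -> q != r -> p != r ->
  pmul (tperm q r) (tperm p q) = pmul (tperm p q) (tperm p r).
Proof.
move=> pq qr pr; apply/permP => m; rewrite !pmulE.
have qp : q != p by rewrite eq_sym.
have rq : r != q by rewrite eq_sym.
have rp : r != p by rewrite eq_sym.
case: (tpermP p q m) => [->|->|/eqP mp /eqP mq].
- by rewrite !tpermL (tpermD pr qr).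
- by rewrite (tpermD qp rp) (tpermD pq rq) tpermR.
- case: (tpermP p r m) => [E|->|/eqP mp' /eqP mr]; first by move: mp; rewrite E eqxx.
  + by rewrite tpermL tpermR.
  + have q' : q != m by rewrite eq_sym.
    have r' : r != m by rewrite eq_sym.
    have p' : p != m by rewrite eq_sym.
    by rewrite (tpermD q' r') (tpermD p' q').
Qed.

Lemma tpermconj n (x : {perm 'I_n}) (a b : 'I_n) :
  pmul (tperm (x a) (x b)) x = pmul x (tperm a b).
Proof.
apply/permP => m; rewrite !pmulE.
case: (tpermP a b m) => [->|->|/eqP ma /eqP mb]; first by rewrite tpermL.
  by rewrite tpermR.
rewrite tpermD // eq_sym (inj_eq perm_inj) //.
Qed.

Lemma pmulA n (a b c : {perm 'I_n}) : pmul (pmul a b) c = pmul a (pmul b c).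
Proof. by rewrite /pmul mulgA. Qed.

Lemma tpermTT n (a b : 'I_n) : pmul (tperm a b) (tperm a b) = 1%g.
Proof. by rewrite /pmul tperm2. Qed.

Lemma pmul1 n (a : {perm 'I_n}) : pmul a 1%g = a.
Proof. by rewrite /pmul mul1g. Qed.

Lemma pmul1l n (a : {perm 'I_n}) : pmul 1%g a = a.
Proof. by rewrite /pmul mulg1. Qed.

Lemma pinv_t n (a b : 'I_n) : pinv (tperm a b) = tperm a b.
Proof. by rewrite /pinv tpermV. Qed.

Lemma neqo n (a b : 'I_n) : a < b -> b != a.
Proof. by move=> h; rewrite eq_sym; exact: ord_lt_neq. Qed.

Lemma I1 n (i k j : 'I_n) : i < k -> k < j ->
  pmul (tperm k j) (tperm i k) = pmul (tperm i k) (tperm i j).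
Proof.
move=> ik kj; apply: tperm3; [exact: ord_lt_neq | exact: ord_lt_neq | exact: ord_lt_neq (ltn_trans ik kj)].
Qed.

Lemma I2 n (i k j : 'I_n) : i < k -> k < j ->
  pmul (tperm i k) (tperm k j) = pmul (tperm k j) (tperm i j).
Proof.
move=> ik kj.
have := @tperm3 n j k i (neqo kj) (neqo ik) (neqo (ltn_trans ik kj)).
by rewrite (tpermC k i) (tpermC j k) (tpermC j i).
Qed.

Lemma bruhat_len n (x y : {perm 'I_n}) : bruhat_le x y -> len x <= len y.
Proof.
elim => [a b [t [_ [_ H]]]|a|a b c _ H1 _ H2]; [exact: ltnW | by [] | exact: leq_trans H1 H2].
Qed.

Lemma step_swap n (x : {perm 'I_n}) (i j : 'I_n) :
  i < j -> x i < x j -> bruhat_le x (pmul x (tperm i j)).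
Proof.
move=> ij xij; apply: rt_step; exists (tperm i j); split.
  by exists i, j; split=> //; exact: ord_lt_neq.
split=> //; exact: len_swap.
Qed.

Lemma rotR n (z : {perm 'I_n}) (i k j : 'I_n) : i < k -> k < j -> z i < z k -> z k < z j ->
  bruhat_le z (pmul (pmul z (tperm k j)) (tperm i k)).
Proof.
move=> ik kj zik zkj.
apply: rt_trans (step_swap kj zkj) _.
apply: step_swap => //; rewrite !pmulE tpermL (tpermD (neqo ik) (neqo (ltn_trans ik kj))).
lia.
Qed.

Lemma rotL n (z : {perm 'I_n}) (i k j : 'I_n) : i < k -> k < j -> z i < z k -> z k < z j ->
  bruhat_le z (pmul (pmul z (tperm i k)) (tperm k j)).
Proof.
move=> ik kj zik zkj.
apply: rt_trans (step_swap ik zik) _.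
apply: step_swap => //; rewrite !pmulE tpermR (tpermD (ord_lt_neq (ltn_trans ik kj)) (ord_lt_neq kj)).
lia.
Qed.

Lemma flip_cases n (i j p q : 'I_n) : i < j -> p < q -> tperm i j q < tperm i j p ->
  ~ (p = i /\ q = j) -> (p = i /\ i < q < j) \/ (q = j /\ i < p < j).
Proof.
move=> ij pq tqp ne; move: tqp ne pq.
case: (tpermP i j p) => [->|->|/ordnat pi /ordnat pj];
  case: (tpermP i j q) => [->|->|/ordnat qi /ordnat qj] => H1 H2 H3;
  first [ by left; split; [done|lia] | by right; split; [done|lia]
        | by exfalso; apply: H2 | lia ].
Qed.

Lemma tperm_mono n (c c1 a b : 'I_n) : (c1:nat) = c.+1 ->
  ~ (a = c /\ b = c1) -> ~ (a = c1 /\ b = c) -> (tperm c c1 a < tperm c c1 b) = (a < b).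
Proof.
move=> Hc; case: (tpermP c c1 a) => [->|->|/ordnat ac /ordnat ac1];
  case: (tpermP c c1 b) => [->|->|/ordnat bc /ordnat bc1] => H1 H2;
  first [ by exfalso; apply: H1 | by exfalso; apply: H2 | apply/idP/idP => ?; lia ].
Qed.

Definition fsw n (c c1 : 'I_n) (x : {perm 'I_n}) :=
  if pinv x c < pinv x c1 then x else pmul (tperm c c1) x.

Lemma pinv_y n (x : {perm 'I_n}) (i j v : 'I_n) :
  pinv (pmul x (tperm i j)) v = tperm i j (pinv x v).
Proof. by rewrite pinv_mul pmulE pinv_t. Qed.

Lemma f_step n (c c1 : 'I_n) (Hc : (c1:nat) = c.+1) (x y : {perm 'I_n}) :
  bruhat_step x y -> bruhat_le (fsw c c1 x) (fsw c c1 y).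
Proof.
move=> [t0 [[i0 [j0 [ne Et]]] [Ey Hl]]]; subst t0 y.
wlog ij : i0 j0 ne Hl / i0 < j0.
  move=> W; case: (ltngtP i0 j0) => h; first exact: W.
    rewrite tpermC; apply: W => //; [by rewrite eq_sym | by rewrite -tpermC].
  by move: ne; rewrite (val_inj h) eqxx.
rename i0 into i; rename j0 into j.
have xij : x i < x j.
  case: (ltnP (x i) (x j)) => // h.
  have h' : x j < x i by have := perm_neq x ne; lia.
  have := @len_swap n (pmul x (tperm i j)) i j ij.
  rewrite !pmulE tpermL tpermR pmulA tpermTT pmul1 => H; have := H h'; lia.
case: (boolP ((x i == c) && (x j == c1))) => [/andP [/eqP xi /eqP xj]|neA].
  have Ey : pmul x (tperm i j) = pmul (tperm c c1) x by rewrite -xi -xj tpermconj.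
  rewrite /fsw Ey pinv_mul !pmulE pinv_t tpermL tpermR.
  have -> : pinv x c = i by rewrite -xi pinvE.
  have -> : pinv x c1 = j by rewrite -xj pinvE.
  rewrite ij.
  have -> : (j < i) = false by apply/negbTE; rewrite -leqNgt ltnW.
  rewrite -pmulA tpermTT pmul1l; exact: rt_refl.
have xneq : ~ (x i = c1 /\ x j = c).
  by move=> [E1 E2]; move: xij; rewrite E1 E2 Hc; lia.
have tab : tperm c c1 (x i) < tperm c c1 (x j).
  rewrite tperm_mono //; move=> [E1 E2]; move: neA; by rewrite E1 E2 !eqxx.
have st' : bruhat_le (pmul (tperm c c1) x) (pmul (tperm c c1) (pmul x (tperm i j))).
  by rewrite -pmulA; apply: step_swap => //; rewrite !pmulE.
have st : bruhat_le x (pmul x (tperm i j)) := step_swap ij xij.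
rewrite /fsw !pinv_y.
have xP0 : x (pinv x c) = c by rewrite pinvE'.
have xP1 : x (pinv x c1) = c1 by rewrite pinvE'.
have nP : pinv x c != pinv x c1.
  apply/negP => /eqP E; move: xP0; rewrite E xP1 => E'; move: Hc; rewrite E'; lia.
move: xP0 xP1 nP; set P0 := pinv x c; set P1 := pinv x c1 => xP0 xP1 nP.
have ntP : (tperm i j P0 : nat) != tperm i j P1 by apply: perm_neq.
have nP' : (P0 : nat) != P1 by [].
case: ifP => b0; case: ifP => b1.
- exact: st.
-
  have b1' : tperm i j P1 < tperm i j P0 by move: b1 ntP; lia.
  have ne' : ~ (P0 = i /\ P1 = j).
    by move=> [E0 E1]; move: neA; rewrite -E0 -E1 xP0 xP1 !eqxx.
  case: (flip_cases ij b0 b1' ne') => [[E0 /andP [iP1 P1j]] | [E1 /andP [iP0 P0j]]].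
  +
    have xi : x i = c by rewrite -E0.
    have xk : x P1 < x j.
      have := perm_neq x (ord_lt_neq P1j); move: xij; rewrite xi xP1 Hc; lia.
    have -> : pmul (tperm c c1) (pmul x (tperm i j)) = pmul (pmul x (tperm P1 j)) (tperm i P1).
      rewrite -{1}xi -{1}xP1 -pmulA tpermconj pmulA -(I1 iP1 P1j) pmulA //.
    apply: rotR => //; rewrite xi xP1 Hc //.
  +
    have xj : x j = c1 by rewrite -E1.
    have xk : x i < x P0.
      have := perm_neq x (ord_lt_neq iP0); move: xij; rewrite xj xP0 Hc; lia.
    have -> : pmul (tperm c c1) (pmul x (tperm i j)) = pmul (pmul x (tperm i P0)) (tperm P0 j).
      rewrite -{1}xP0 -{1}xj -pmulA tpermconj pmulA -(I2 iP0 P0j) pmulA //.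
    apply: rotL => //; rewrite xj xP0 Hc //.
-
  have b0' : P1 < P0 by move: b0 nP'; lia.
  have ne' : ~ (P1 = i /\ P0 = j).
    by move=> [E0 E1]; move: xij; rewrite -E0 -E1 xP0 xP1 Hc; lia.
  case: (flip_cases ij b0' b1 ne') => [[E0 /andP [iP0 P0j]] | [E1 /andP [iP1 P1j]]].
  +
    have xi : x i = c1 by rewrite -E0.
    have xk : c1 < x j.
      have := perm_neq x (ord_lt_neq P0j); move: xij; rewrite xi xP0 Hc; lia.
    have E : pmul (tperm c c1) x = pmul x (tperm i P0).
      by rewrite tpermC -{1}xi -{1}xP0 tpermconj.
    have -> : pmul x (tperm i j) = pmul (pmul (pmul (tperm c c1) x) (tperm P0 j)) (tperm i P0).
      by rewrite E pmulA pmulA (I1 iP0 P0j) -(pmulA (tperm i P0)) tpermTT pmul1l.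
    apply: rotR => //; rewrite !pmulE ?xi xP0 tpermL ?tpermR; first lia.
    rewrite tpermD; first lia.
      by apply/negP => /eqP E'; move: xk; rewrite -E' Hc; lia.
    by apply/negP => /eqP E'; move: xk; rewrite -E'; lia.
  +
    have xj : x j = c by rewrite -E1.
    have xk : x i < c.
      have := perm_neq x (ord_lt_neq iP1); move: xij; rewrite xj xP1 Hc; lia.
    have E : pmul (tperm c c1) x = pmul x (tperm P1 j).
      by rewrite tpermC -{1}xj -{1}xP1 tpermconj tpermC.
    have -> : pmul x (tperm i j) = pmul (pmul (pmul (tperm c c1) x) (tperm i P1)) (tperm P1 j).
      by rewrite E pmulA pmulA (I2 iP1 P1j) -(pmulA (tperm P1 j)) tpermTT pmul1l.
    apply: rotL => //; rewrite !pmulE ?xj xP1 tpermR ?tpermL; last lia.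
    rewrite tpermD; first lia.
      by apply/negP => /eqP E'; move: xk; rewrite -E'; lia.
    by apply/negP => /eqP E'; move: xk; rewrite -E' Hc; lia.
- exact: st'.
Qed.

Lemma f_le n (c c1 : 'I_n) (Hc : (c1:nat) = c.+1) (x y : {perm 'I_n}) :
  bruhat_le x y -> bruhat_le (fsw c c1 x) (fsw c c1 y).
Proof.
elim => [a b H|a|a b d _ H1 _ H2]; [exact: f_step | exact: rt_refl | exact: rt_trans H1 H2].
Qed.

Lemma mono_ge n (s : {perm 'I_n}) : (forall i j : 'I_n, i < j -> s i < s j) -> forall i : 'I_n, i <= s i.
Proof.
move=> M.
suff H : forall m (Hm : m < n), m <= s (Ordinal Hm) by case=> m Hm; apply: H.
elim => [|m IH] Hm //.
have Hm' : m < n by lia.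
have := M (Ordinal Hm') (Ordinal Hm) (ltnSn m); have := IH Hm'; lia.
Qed.

Lemma adj_desc n (z : {perm 'I_n}) d : forall i j : 'I_n, (j:nat) = i + d.+1 -> z j < z i ->
  exists c c1 : 'I_n, (c1:nat) = c.+1 /\ z c1 < z c.
Proof.
elim: d => [|d IH] i j Ej zji.
  by exists i, j; split => //; lia.
have lt : i.+1 < n by have := ltn_ord j; lia.
case: (ltnP (z (Ordinal lt)) (z i)) => h.
  by exists i, (Ordinal lt).
apply: (IH (Ordinal lt) j) => /=; lia.
Qed.

Lemma descent_exists n (z : {perm 'I_n}) : z != 1%g ->
  exists c c1 : 'I_n, (c1:nat) = c.+1 /\ z c1 < z c.
Proof.
move=> z1.
case: (boolP [exists i : 'I_n, exists j : 'I_n, (i < j) && (z j < z i)]).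
  move=> /existsP [i /existsP [j /andP [ij zji]]].
  apply: (adj_desc (d := j - i - 1) (i := i) (j := j)) => //; lia.
rewrite negb_exists => /forallP H.
have M : forall i j : 'I_n, i < j -> z i < z j.
  move=> i j ij; move: (H i); rewrite negb_exists => /forallP /(_ j).
  rewrite ij /= => h; have := perm_neq z (ord_lt_neq ij); lia.
have Mi : forall i j : 'I_n, i < j -> (z^-1)%g i < (z^-1)%g j.
  move=> i j ij; case: (ltnP ((z^-1)%g i) ((z^-1)%g j)) => // h.
  have ne : ((z^-1)%g j : nat) != (z^-1)%g i by apply: perm_neq; rewrite eq_sym; exact: ord_lt_neq.
  have h' : (z^-1)%g j < (z^-1)%g i by lia.
  have := M _ _ h'; rewrite !permKV; lia.
case/negP: z1; apply/eqP/permP => i; rewrite perm1.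
apply: val_inj => /=.
have := mono_ge M i; have := mono_ge Mi (z i); rewrite permK; lia.
Qed.

Lemma IncL_len n (u w : {perm 'I_n}) : IncL u w -> len u <= len w.
Proof.
move=> H; apply: subset_leq_card; apply/subsetP => -[a b]; rewrite !inE /= => /andP [ab uba].
by rewrite ab (H _ _ ab uba).
Qed.

Lemma main_ind n (w : {perm 'I_n}) : forall k (p u : {perm 'I_n}),
  len w - len u < k -> IncL u w -> IncL (pinv u) (pinv p) ->
  len (pmul (pmul w (pinv u)) p) < len w + len (pmul (pinv u) p) ->
  exists u', bruhat_lt u u' /\ IncL u' w /\ IncL (pinv u') (pinv p).
Proof.
elim => [|k IH] p u // Hk HL HR Hbad.
have uw : u != w.
  apply/negP => /eqP E; subst u.
  have [z [Ep Ez]] := proj2 (leR_iff w p) (proj2 (leL_IncL _ _) HR).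
  have Ez' : pmul (pinv w) p = z by apply/permP => i; rewrite Ep !pmulE pinvE.
  have Ew : pmul (pmul w (pinv w)) p = p by apply/permP => i; rewrite !pmulE pinvE'.
  move: Hbad; rewrite Ez' Ew Ez; lia.
have zn1 : pmul w (pinv u) != 1%g.
  apply: contra uw => /eqP E; apply/eqP/permP => i.
  by move/permP: E => /(_ (u i)); rewrite pmulE pinvE perm1 => ->.
have [c [c1 [Hc zdesc]]] := descent_exists zn1.
rewrite !pmulE in zdesc.
have up0 : u (pinv u c) = c by rewrite pinvE'.
have uq0 : u (pinv u c1) = c1 by rewrite pinvE'.
move: zdesc up0 uq0; set p0 := pinv u c; set q0 := pinv u c1 => zdesc up0 uq0.
have pq : p0 < q0.
  have npq : (p0 : nat) != q0.
    apply/negP => /eqP /val_inj E; move: up0; rewrite E uq0 => E'; move: Hc; rewrite E'; lia.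
  case: (ltnP p0 q0) => // h.
  have h' : q0 < p0 by lia.
  have := HL _ _ h'; rewrite up0 uq0 Hc => /(_ (ltnSn _)); lia.
have Etu : pmul (tperm c c1) u = pmul u (tperm p0 q0).
  by rewrite -{1}up0 -{1}uq0 tpermconj.
have stepu : bruhat_le u (pmul (tperm c c1) u).
  by rewrite Etu; apply: step_swap => //; rewrite up0 uq0 Hc.
have lenu : len u < len (pmul (tperm c c1) u).
  by rewrite Etu; apply: len_swap => //; rewrite up0 uq0 Hc.
have HLt : IncL (pmul (tperm c c1) u) w.
  move=> i j ij; rewrite !pmulE.
  case: (boolP ((i == p0) && (j == q0))) => [/andP [/eqP -> /eqP ->] _ //|nij].
  rewrite tperm_mono //.
    by apply: HL.
    move=> [E1 E2]; move: ij; rewrite (perm_inj (etrans E1 (esym up0))) (perm_inj (etrans E2 (esym uq0))).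
    by move=> h; move: pq; lia.
  move=> [E1 E2]; move: nij.
  by rewrite (perm_inj (etrans E2 (esym up0))) (perm_inj (etrans E1 (esym uq0))) !eqxx.
have cc1 : c != c1 by apply/negP => /eqP E; move: Hc; rewrite E; lia.
have pinv_tu : pinv (pmul (tperm c c1) u) = pmul (pinv u) (tperm c c1) by rewrite pinv_mul pinv_t.
have ntu : u != pmul (tperm c c1) u by apply/negP => /eqP E; move: lenu; rewrite -E ltnn.
case: (ltnP (pinv p c1) (pinv p c)) => hp.
-
  exists (pmul (tperm c c1) u); split; [split => //; exact/eqP | split => //].
  rewrite pinv_tu => a b ab; rewrite !pmulE.
  have := HR a b; have := HR c1 b; have := HR a c; move: ab.
  case: (tpermP c c1 a) => [->|->|/ordnat ac /ordnat ac1];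
    case: (tpermP c c1 b) => [->|->|/ordnat bc /ordnat bc1]; rewrite /p0 /q0 in pq; lia.
-
  have hp' : pinv p c < pinv p c1.
    have := perm_neq (pinv p) cc1; lia.
  set p' := pmul (tperm c c1) p.
  have HRt : IncL (pinv (pmul (tperm c c1) u)) (pinv p').
    rewrite pinv_tu /p' pinv_mul pinv_t => a b ab; rewrite !pmulE.
    have := HR (tperm c c1 a) (tperm c c1 b); move: ab.
    case: (tpermP c c1 a) => [->|->|/ordnat ac /ordnat ac1];
      case: (tpermP c c1 b) => [->|->|/ordnat bc /ordnat bc1]; lia.
  have Hbad' : len (pmul (pmul w (pinv (pmul (tperm c c1) u))) p') <
               len w + len (pmul (pinv (pmul (tperm c c1) u)) p').
    have E1 : pmul (pinv (pmul (tperm c c1) u)) p' = pmul (pinv u) p.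
      by rewrite pinv_tu /p' pmulA -(pmulA (tperm c c1)) tpermTT pmul1l.
    have E2 : pmul (pmul w (pinv (pmul (tperm c c1) u))) p' = pmul (pmul w (pinv u)) p.
      by rewrite pmulA E1 -pmulA.
    by rewrite E1 E2.
  have Hk' : len w - len (pmul (tperm c c1) u) < k.
    have := IncL_len HLt; lia.
  have [u'' [[bl nel] [HL'' HR'']]] := IH p' (pmul (tperm c c1) u) Hk' HLt HRt Hbad'.
  move: HR''; rewrite /p' pinv_mul pinv_t => HR''.
  case: (ltnP (pinv u'' c1) (pinv u'' c)) => hu.
  +
    exists (pmul (tperm c c1) u''); split; [split|split].
    * have := f_le Hc bl; rewrite /fsw pinv_tu !pmulE tpermL tpermR -/p0 -/q0.
      have -> : (q0 < p0) = false by apply/negbTE; rewrite -leqNgt ltnW.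
      have -> : (pinv u'' c < pinv u'' c1) = false by apply/negbTE; rewrite -leqNgt ltnW.
      by rewrite -pmulA tpermTT pmul1l.
    * move=> E; apply: nel; by rewrite E -pmulA tpermTT pmul1l.
    * move=> i j ij; rewrite !pmulE.
      case: (boolP ((u'' i == c) && (u'' j == c1))) => [/andP [/eqP E1 /eqP E2]|n1].
        move: hu; rewrite -E1 -E2 !pinvE; lia.
      case: (boolP ((u'' i == c1) && (u'' j == c))) => [/andP [/eqP E1 /eqP E2]|n2].
        rewrite E1 E2 tpermL tpermR; lia.
      rewrite tperm_mono //.
        by apply: HL''.
        by move=> [E1 E2]; move: n2; rewrite E1 E2 !eqxx.
      by move=> [E1 E2]; move: n1; rewrite E1 E2 !eqxx.
    * rewrite pinv_mul pinv_t => a b ab; rewrite !pmulE.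
      have := HR'' (tperm c c1 a) (tperm c c1 b); rewrite !pmulE !tpermK; move: ab.
      case: (tpermP c c1 a) => [->|->|/ordnat ac /ordnat ac1];
        case: (tpermP c c1 b) => [->|->|/ordnat bc /ordnat bc1]; lia.
  +
    have hu' : pinv u'' c < pinv u'' c1.
      have := perm_neq (pinv u'') cc1; lia.
    exists u''; split; [split|split => //].
    * exact: rt_trans stepu bl.
    * move=> E; subst u''; have := bruhat_len bl; lia.
    * move=> a b ab.
      have := HR'' a b; have := HR'' c1 b; have := HR'' a c; rewrite !pmulE tpermR; move: ab.
      case: (tpermP c c1 a) => [->|->|/ordnat ac /ordnat ac1];
        case: (tpermP c c1 b) => [->|->|/ordnat bc /ordnat bc1]; rewrite ?tpermL ?tpermR; lia.
Qed.

Unset Implicit Arguments.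

Theorem lemma7p1 (n : nat) (w pi u : {perm 'I_n}) :
  leL u w -> leR u pi ->
  len (pmul w (pinv u)) + len u + len (pmul (pinv u) pi)
    > len (pmul (pmul w (pinv u)) pi) ->
  exists u' : {perm 'I_n}, bruhat_lt u u' /\ leL u' w /\ leR u' pi.
Proof.
move=> HL HR Hbad.
have [z [Ew Ez]] := HL.
have Ez' : z = pmul w (pinv u) by apply/permP => i; rewrite Ew !pmulE pinvE'.
have HLi := proj1 (leL_IncL u w) HL.
have HRi := proj1 (leL_IncL _ _) (proj1 (leR_iff u pi) HR).
have Hb : len (pmul (pmul w (pinv u)) pi) < len w + len (pmul (pinv u) pi).
  by move: Hbad; rewrite -Ez' Ez; lia.
have [u' [bl [H1 H2]]] := @main_ind n w (len w - len u).+1 pi u (ltnSn _) HLi HRi Hb.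
exists u'; split => //; split; first exact: proj2 (leL_IncL _ _) H1.
by apply/(proj2 (leR_iff _ _)); exact: proj2 (leL_IncL _ _) H2.
Qed.
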